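(* Let $G$ be a monomer graph, $G^p$ its polymer graph and $G^{*}$ its induced star-linking graph, all with the same initial node features (node $v^p_i$ of $G^p$ having the feature of $v_{i\bmod n}$). Consider a network composed of message passing layers and nodewise transformations, ending with a mean pooling. Then the output of the network on $G^p$ equals its output on $G^{*}$.
   Context: A monomer graph is $G=(V,E,\mathbf{X})$ with atoms $V=\{v_0,\dots,v_{n-1}\}$, bonds $E$, features $\mathbf{x}_i$ of $v_i$, and boundary atoms $v_0,v_{n-1}$. The polymer graph $G^p$ has nodes $v^p_i$, $i\in\mathbb{Z}$, with $v^p_i$ carrying the features of $v_{i\bmod n}$; its edges are $(v^p_{kn+a},v^p_{kn+b})$ for every $k\in\mathbb{Z}$ and every bond $(v_a,v_b)\in E$, plus $(v^p_{kn-1},v^p_{kn})$ for every $k\in\mathbb{Z}$. The induced star-linking graph $G^*$ has node set $V$, edge set $E\cup\{(v_0,v_{n-1})\}$ and the same features. A message passing layer updates all node features simultaneously by $\mathbf{x}_v\gets\mathrm{UPDATE}(\mathbf{x}_v,\mathrm{AGG}(\{\mathbf{x}_u\}_{u\in\mathcal{N}(v)}))$ with fixed functions UPDATE, AGG ($\mathcal{N}(v)$ the neighbors of $v$). A nodewise transformation applies a fixed function to each node feature independently. The layers are applied identically on both graphs. Node features on $G^p$ remain $n$-periodic in the index, and mean pooling on $G^p$ means the average of the node features over one period $v^p_0,\dots,v^p_{n-1}$; on $G^*$ it is the average over all $n$ nodes. *)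

(* Defs.v *)
From HB Require Import structures.
From mathcomp Require Import all_boot all_order all_algebra.
From mathcomp Require Import boolp.
Set Implicit Arguments. Unset Strict Implicit. Unset Printing Implicit Defensive.
Import Order.TTheory GRing.Theory Num.Theory.
Local Open Scope ring_scope.

(* An aggregation function: a function of the MULTISET of neighbour features,
   i.e. a function on lists that is invariant under permutation. *)
Record agg_fun (T : eqType) := AggFun {
  agg_app :> seq T -> T;
  agg_perm : forall s t : seq T, perm_eq s t -> agg_app s = agg_app t }.

Inductive layer (T : eqType) :=
  | MPLayer of (T -> T -> T) & agg_fun T
  | NodeLayer of (T -> T).

(* A graph on node type V is given by its neighbour lists (each neighbour listed
   once); all nodes are updated simultaneously. *)
Definition apply_layer (V : Type) (T : eqType) (nbrs : V -> seq V)
    (l : layer T) (h : V -> T) : V -> T :=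
  match l with
  | MPLayer upd agg => fun v => upd (h v) (agg (map h (nbrs v)))
  | NodeLayer f => fun v => f (h v)
  end.

Definition run_net (V : Type) (T : eqType) (nbrs : V -> seq V)
    (net : seq (layer T)) (h : V -> T) : V -> T :=
  foldl (fun h' l => apply_layer nbrs l h') h net.

(* Monomer: atoms 'I_n, bonds E (undirected: (a,b) in E is the bond {v_a,v_b}). *)
Definition polymer_edge (n : nat) (E : rel 'I_n) (i j : int) : Prop :=
  (exists (k : int) (a b : 'I_n), E a b /\
       i = k * n%:Z + (a : nat)%:Z /\ j = k * n%:Z + (b : nat)%:Z)
  \/ (exists k : int, i = k * n%:Z - 1 /\ j = k * n%:Z).

Definition polymer_adj (n : nat) (E : rel 'I_n) (i j : int) : Prop :=
  polymer_edge E i j \/ polymer_edge E j i.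

(* Neighbours of v^p_i: every neighbour lies within distance n of i, so we list
   the adjacent nodes among i-2n, ..., i+2n (each once). *)
Definition polymer_nbrs (n : nat) (E : rel 'I_n) (i : int) : seq int :=
  [seq j <- [seq i + (t : nat)%:Z - (2 * n)%:Z | t <- iota 0 (4 * n).+1]
     | `[< polymer_adj E i j >]].

Definition star_edge (n : nat) (E : rel 'I_n) (a b : 'I_n) : bool :=
  E a b || (((a : nat) == 0%N) && ((b : nat) == n.-1)).

Definition star_adj (n : nat) (E : rel 'I_n) (a b : 'I_n) : bool :=
  star_edge E a b || star_edge E b a.

Definition star_nbrs (n : nat) (E : rel 'I_n) (a : 'I_n) : seq 'I_n :=
  [seq b <- enum 'I_n | star_adj E a b].

Definition mean_pool_polymer (R : numFieldType) (T : lmodType R) (n : nat)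
    (h : int -> T) : T :=
  (n%:R)^-1 *: \sum_(a < n) h (a : nat)%:Z.

Definition mean_pool_star (R : numFieldType) (T : lmodType R) (n : nat)
    (h : 'I_n -> T) : T :=
  (n%:R)^-1 *: \sum_(a < n) h a.

(* Main.v *)
Require Import Defs.
From HB Require Import structures.
From mathcomp Require Import all_boot all_order all_algebra.
From mathcomp Require Import boolp zify lra.
Import Order.TTheory GRing.Theory Num.Theory.
Local Open Scope ring_scope.

Lemma divu (n : nat) (k k' : int) (a a' : nat) : (a < n)%N -> (a' < n)%N ->
  k * n%:Z + a%:Z = k' * n%:Z + a'%:Z -> k = k' /\ a = a'.
Proof. move=> ha ha' e.
have [h|h] : (k' + 1 <= k) \/ (k <= k') by lia.
  have : (k' + 1) * n%:Z <= k * n%:Z by apply: ler_wpM2r.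
  lia.
have [h2|h2] : (k + 1 <= k') \/ (k' <= k) by lia.
  have : (k + 1) * n%:Z <= k' * n%:Z by apply: ler_wpM2r.
  lia.
have kk : k = k' by lia.
subst; lia.
Qed.

Lemma rng (i j : int) (n : nat) : i - (2*n)%:Z <= j <= i + (2*n)%:Z ->
  j \in [seq i + (t : nat)%:Z - (2 * n)%:Z | t <- iota 0 (4 * n).+1].
Proof.
move=> h; apply/mapP; exists (absz (j - i + (2*n)%:Z)); rewrite ?mem_iota; lia.
Qed.

Arguments divu {n k k' a a'}.
Definition gmap (n : nat) (k : int) (a b : 'I_n) : int :=
  if ((a : nat) == 0%N) && ((b : nat) == n.-1) then k * n%:Z - 1
  else if ((a : nat) == n.-1) && ((b : nat) == 0%N) then (k + 1) * n%:Z
  else k * n%:Z + (b : nat)%:Z.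

Arguments gmap {n}.
Section S.
Variables (n : nat) (E : rel 'I_n).
Hypothesis n1 : (1 < n)%N.
Hypothesis hE : forall a b : 'I_n, (a : nat) = 0%N -> (b : nat) = n.-1 -> ~~ E a b /\ ~~ E b a.

Lemma ordv (m : nat) : (m < n)%N -> exists o : 'I_n, (o : nat) = m.
Proof. by move=> h; exists (Ordinal h). Qed.

Lemma adj_fwd (k : int) (a : 'I_n) (j : int) :
  polymer_adj E (k * n%:Z + (a : nat)%:Z) j ->
  exists2 b, star_adj E a b & j = gmap k a b.
Proof.
have hl : (n.-1 < n)%N by lia.
have h0 : (0 < n)%N by lia.
have ha := ltn_ord a.
case=> [[[k' [a' [b' [eab [ei ej]]]]] | [k' [ei ej]]] | [[k' [a' [b' [eab [ej ei]]]]] | [k' [ej ei]]]].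
- have := ltn_ord a'; have := ltn_ord b' => hb ha'.
  have [kk aa] := divu ha ha' ei; subst k'.
  have {}aa : a = a' by apply: val_inj.
  subst a'; exists b'; first by rewrite /star_adj /star_edge eab.
  rewrite /gmap ej.
  case: eqP => a0; case: eqP => b0 /=.
  + by have := hE _ _ a0 b0; rewrite eab => -[].
  + rewrite ifF //; apply/negbTE/nandP; left; apply/eqP; lia.
  + rewrite ifF //; apply/negbTE/nandP; right; apply/eqP; lia.
  + case: ifP => // /andP[/eqP an /eqP bz].
    by have := hE _ _ bz an; rewrite eab => -[].
- have ei' : k * n%:Z + (a:nat)%:Z = (k' - 1) * n%:Z + (n.-1)%:Z by lia.
  have [kk aa] := divu ha hl ei'.
  have [o ov] := ordv _ h0.
  exists o; first by rewrite /star_adj /star_edge ov aa !eqxx !orbT.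
  rewrite /gmap ov aa; case: ifP => [/andP[/eqP ? _]|_]; first lia.
  rewrite eqxx /=; lia.
- have := ltn_ord a'; have := ltn_ord b' => hb ha'.
  have [kk aa] := divu ha hb ei; subst k'.
  have {}aa : a = b' by apply: val_inj.
  subst b'; exists a'; first by rewrite /star_adj /star_edge eab orbT.
  rewrite /gmap ej.
  case: eqP => a0; case: eqP => b0 /=.
  + by have := hE _ _ a0 b0; rewrite eab => -[].
  + rewrite ifF //; apply/negbTE/nandP; left; apply/eqP; lia.
  + rewrite ifF //; apply/negbTE/nandP; right; apply/eqP; lia.
  + case: ifP => // /andP[/eqP an /eqP bz].
    by have := hE _ _ bz an; rewrite eab => -[].
- have ei' : k * n%:Z + (a:nat)%:Z = k' * n%:Z + 0%:Z by lia.
  have [kk aa] := divu ha h0 ei'.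
  have [o ov] := ordv _ hl.
  exists o; first by rewrite /star_adj /star_edge ov aa !eqxx /= orbT.
  by rewrite /gmap ov aa !eqxx /= kk.
Qed.

Lemma adj_bwd (k : int) (a b : 'I_n) :
  star_adj E a b ->
  polymer_adj E (k * n%:Z + (a : nat)%:Z) (gmap k a b) /\
  ((k * n%:Z + (a : nat)%:Z) - (2*n)%:Z <= gmap k a b <= (k * n%:Z + (a : nat)%:Z) + (2*n)%:Z).
Proof.
have ha := ltn_ord a; have hb := ltn_ord b.
rewrite /gmap; case: ifP => [/andP[/eqP a0 /eqP b0] _|h1].
  split; last lia.
  right; right; exists k; split; lia.
case: ifP => [/andP[/eqP a0 /eqP b0] _|h2].
  split; last lia.
  left; right; exists (k + 1); split; lia.
move=> hs; split; last lia.
move: hs; rewrite /star_adj /star_edge h1.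
case/orP => [/orP[e|] | /orP[e|]].
- by left; left; exists k, a, b.
- by [].
- by right; left; exists k, b, a.
- by move=> /andP[/eqP b0 /eqP a0]; move: h2; rewrite a0 b0 !eqxx.
Qed.

Lemma g_inj (k : int) (a : 'I_n) : injective (gmap k a).
Proof.
have ha := ltn_ord a.
move=> b c; have hb := ltn_ord b; have hc := ltn_ord c.
rewrite /gmap => e; apply: val_inj => /=; move: e.
repeat (case: ifP => [/andP[/eqP ? /eqP ?]|_]); lia.
Qed.

Lemma nbrs_perm (k : int) (a : 'I_n) :
  perm_eq (polymer_nbrs E (k * n%:Z + (a : nat)%:Z)) (map (gmap k a) (star_nbrs E a)).
Proof.
apply: uniq_perm.
- apply: filter_uniq; rewrite map_inj_uniq ?iota_uniq //.
  move=> t u; move/eqP; rewrite -subr_eq0; move/eqP => e; lia.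
- by rewrite (map_inj_uniq (@g_inj k a)) filter_uniq // enum_uniq.
move=> j; apply/idP/idP.
- rewrite mem_filter => /andP[/asboolP h _].
  have [b hb ->] := adj_fwd k a j h.
  by apply: map_f; rewrite mem_filter mem_enum hb.
- case/mapP => b; rewrite mem_filter mem_enum andbT => hb ->.
  have [h1 h2] := adj_bwd k a b hb.
  by rewrite mem_filter rng // andbT; apply/asboolP.
Qed.
End S.

Lemma g_form (n : nat) (k : int) (a b : 'I_n) : exists k' : int, gmap k a b = k' * n%:Z + (b : nat)%:Z.
Proof.
rewrite /gmap; case: ifP => [/andP[/eqP a0 /eqP b0]|_].
  exists (k - 1); rewrite b0; have := ltn_ord b; lia.
case: ifP => [/andP[/eqP a0 /eqP b0]|_].
  by exists (k + 1); rewrite b0 addr0.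
by exists k.
Qed.

Lemma run_inv (n : nat) (E : rel 'I_n) (n1 : (1 < n)%N)
  (hE : forall a b : 'I_n, (a : nat) = 0%N -> (b : nat) = n.-1 -> ~~ E a b /\ ~~ E b a)
  (T : eqType) (net : seq (layer T)) (hp : int -> T) (hs : 'I_n -> T) :
  (forall (k : int) (a : 'I_n), hp (k * n%:Z + (a : nat)%:Z) = hs a) ->
  forall (k : int) (a : 'I_n),
  run_net (polymer_nbrs E) net hp (k * n%:Z + (a : nat)%:Z) = run_net (star_nbrs E) net hs a.
Proof.
elim: net hp hs => [|l net IH] hp hs inv /=; first exact: inv.
apply: IH => k a; case: l => [upd agg|f] /=; rewrite inv //.
congr upd; rewrite (agg_perm agg (perm_map hp (@nbrs_perm n E n1 hE k a))) -map_comp.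
apply: f_equal; apply: eq_map => b /=.
by have [k' ->] := g_form _ k a b; apply: inv.
Qed.

Theorem theorem1 (R : numFieldType) (T : lmodType R) (n : nat) (E : rel 'I_n)
    (x : 'I_n -> T) (xp : int -> T) (net : seq (layer T)) :
  (1 < n)%N ->
  (forall a b : 'I_n, (a : nat) = 0%N -> (b : nat) = n.-1 -> ~~ E a b /\ ~~ E b a) ->
  (forall (k : int) (a : 'I_n), xp (k * n%:Z + (a : nat)%:Z) = x a) ->
  mean_pool_polymer n (run_net (polymer_nbrs E) net xp)
  = mean_pool_star (run_net (star_nbrs E) net x).
Proof.
move=> n1 hE hx; rewrite /mean_pool_polymer /mean_pool_star; congr (_ *: _).
apply: eq_bigr => a _.
by rewrite -(@run_inv n E n1 hE _ net _ _ hx 0 a) mul0r add0r.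
Qed.
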